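(* There exists a smooth $\varrho$-function, i.e. a $\varrho$-function $\varrho:[\omega_1]^2\to\omega$ such that for every limit ordinal $\lambda<\omega_1$ the numerical sequence $\left(\#F_n^\lambda/n\right)_n$ is bounded, where $F_n^\lambda=\{\beta<\lambda:\varrho(\beta,\lambda)\le n\}$.
   Context: A $\varrho$-function is a map $\varrho:[\omega_1]^2\to\omega$ (write $\varrho(\alpha,\beta)$ for $\alpha<\beta$) such that: (1) $\varrho(\alpha,\gamma)\le\max\{\varrho(\alpha,\beta),\varrho(\beta,\gamma)\}$ for all $\alpha<\beta<\gamma<\omega_1$; (2) $\varrho(\alpha,\beta)\le\max\{\varrho(\alpha,\gamma),\varrho(\beta,\gamma)\}$ for all $\alpha<\beta<\gamma<\omega_1$; (3) $\{\alpha<\beta:\varrho(\alpha,\beta)\le n\}$ is finite for all $\beta<\omega_1$ and $n\in\mathbb N$. *)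

(* Defs.v *)
(* omega_1 is axiomatised up to isomorphism: a strictly,
   totally, well-ordered type which is uncountable and all of whose proper
   initial segments are countable. *)
From Stdlib Require Import Arith List.
Import ListNotations.

Definition injective {A B : Type} (f : A -> B) : Prop :=
  forall x y, f x = f y -> x = y.

Record is_omega1 (W : Type) (lt : W -> W -> Prop) : Prop := {
  o1_irrefl : forall a, ~ lt a a;
  o1_trans  : forall a b c, lt a b -> lt b c -> lt a c;
  o1_total  : forall a b, lt a b \/ a = b \/ lt b a;
  o1_wf     : well_founded lt;
  o1_uncountable : ~ exists f : W -> nat, injective f;
  o1_segments_countable :
    forall a : W, exists f : {b : W | lt b a} -> nat, injective f
}.

Definition is_limit {W : Type} (lt : W -> W -> Prop) (l : W) : Prop :=
  (exists b, lt b l) /\ (forall b, lt b l -> exists c, lt b c /\ lt c l).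

(* rho-function on [W]^2; rho a b is only meaningful for lt a b *)
Definition is_rho_function {W : Type} (lt : W -> W -> Prop)
    (rho : W -> W -> nat) : Prop :=
  (forall a b c, lt a b -> lt b c -> rho a c <= Nat.max (rho a b) (rho b c)) /\
  (forall a b c, lt a b -> lt b c -> rho a b <= Nat.max (rho a c) (rho b c)) /\
  (forall (b : W) (n : nat), exists l : list W,
      forall a, lt a b -> rho a b <= n -> In a l).

Definition F_set {W : Type} (lt : W -> W -> Prop) (rho : W -> W -> nat)
    (n : nat) (lam : W) (b : W) : Prop :=
  lt b lam /\ rho b lam <= n.

Definition card_le {W : Type} (P : W -> Prop) (m : nat) : Prop :=
  forall l : list W, NoDup l -> (forall x, In x l -> P x) -> length l <= m.

Definition smooth {W : Type} (lt : W -> W -> Prop) (rho : W -> W -> nat) : Prop :=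
  forall lam, is_limit lt lam ->
    exists C : nat, forall n, 1 <= n -> card_le (F_set lt rho n lam) (C * n).

(* Main.v *)
Require Import Defs.
From Stdlib Require Import Arith List Lia ClassicalEpsilon FunctionalExtensionality.
Import ListNotations.

Definition Good {W : Type} (lt : W -> W -> Prop) (be : W) (R : W -> W -> nat) (r : W -> nat) : Prop :=
 (forall a b, lt a b -> lt b be -> r a <= Nat.max (R b a) (r b)) /\
 (forall a b, lt a b -> lt b be -> R b a <= Nat.max (r a) (r b)) /\
 (forall n, exists l, forall a, lt a be -> r a <= n -> In a l) /\
 (forall k, exists m, forall n, m <= n -> forall l, NoDup l ->
    (forall x, In x l -> lt x be /\ r x <= n) -> S k * length l <= n).

Fixpoint bnd (h : nat -> nat) (k : nat) : nat :=
  match k with 0 => 0 | S k => Nat.max (bnd h k) (h k) end.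

Lemma bnd_ge h i k : i < k -> h i <= bnd h k.
Proof.
  induction k; simpl; intros; [lia|].
  destruct (Nat.eq_dec i k); subst; [lia|]. specialize (IHk ltac:(lia)); lia.
Qed.

Lemma bnd_le h k x : (forall i, i < k -> h i <= x) -> bnd h k <= x.
Proof.
  induction k; simpl; intros; [lia|].
  assert (bnd h k <= x) by (apply IHk; intros; apply H; lia).
  specialize (H k ltac:(lia)); lia.
Qed.

Lemma bnd_mono h i k : i <= k -> bnd h i <= bnd h k.
Proof. induction 1; simpl; lia. Qed.

Lemma least_ex (P : nat -> Prop) : (exists k, P k) -> exists k, P k /\ forall i, i < k -> ~ P i.
Proof.
  intros [k Hk]. induction k as [k IH] using lt_wf_ind.
  destruct (classic (exists i, i < k /\ P i)) as [[i [Hi Pi]]|Hn].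
  - exact (IH i Hi Pi).
  - exists k; split; auto. intros i Hi Pi; apply Hn; eauto.
Qed.

Lemma Good_congr {W} (lt : W -> W -> Prop) be R R' r :
  (forall b, lt b be -> R b = R' b) -> Good lt be R r -> Good lt be R' r.
Proof.
  intros E [HA [HB [HF HS]]]; repeat split; auto.
  - intros a b Hab Hb; rewrite <- (E b Hb); auto.
  - intros a b Hab Hb; rewrite <- (E b Hb); auto.
Qed.

Lemma cofinal {W} (lt : W -> W -> Prop) (Hw : is_omega1 W lt) be :
  is_limit lt be -> exists g : nat -> W, (forall k, lt (g k) be) /\
    (forall k, lt (g k) (g (S k))) /\ (forall a, lt a be -> exists k, lt a (g k)).
Proof.
  intros [[b0 Hb0] Hlim].
  destruct (o1_segments_countable _ _ Hw be) as [f Hf].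
  assert (ext : forall x, lt x be -> forall k, exists c, lt c be /\ lt x c /\
     (forall b (p : lt b be), f (exist _ b p) = k -> lt b c)).
  { intros x Hx k.
    destruct (classic (exists b (p : lt b be), f (exist _ b p) = k)) as [[b1 [p1 E1]]|Hn].
    - assert (Hy : exists y, lt y be /\ (x = y \/ lt x y) /\ (b1 = y \/ lt b1 y)).
      { destruct (o1_total _ _ Hw x b1) as [H|[H|H]].
        - exists b1; auto.
        - subst; exists b1; auto.
        - exists x; auto. }
      destruct Hy as [y [Hy [H1 H2]]].
      destruct (Hlim y Hy) as [c [Hyc Hc]].
      exists c; split; [exact Hc|split].
      + destruct H1 as [H1|H1]; [subst; auto| exact (o1_trans _ _ Hw _ _ _ H1 Hyc)].
      + intros b p Eb. rewrite <- E1 in Eb. apply Hf in Eb.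
        apply (f_equal (@proj1_sig _ _)) in Eb; simpl in Eb; subst b.
        destruct H2; [subst; auto| exact (o1_trans _ _ Hw _ _ _ H Hyc)].
    - destruct (Hlim x Hx) as [c [Hxc Hc]]. exists c; repeat split; auto.
      intros b p Eb; exfalso; apply Hn; eauto. }
  pose (nxt := fun (x : {x | lt x be}) k =>
      let H := constructive_indefinite_description _ (ext (proj1_sig x) (proj2_sig x) k) in
      exist (fun y => lt y be) (proj1_sig H) (proj1 (proj2_sig H))).
  pose (sq := nat_rect (fun _ => {x | lt x be}) (exist _ b0 Hb0) (fun k x => nxt x k)).
  exists (fun k => proj1_sig (sq k)). split; [|split].
  - intros k; exact (proj2_sig (sq k)).
  - intros k. simpl. unfold nxt. simpl.
    destruct (constructive_indefinite_description _ _) as [c [H1 [H2 H3]]]; simpl. exact H2.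
  - intros a Ha. exists (S (f (exist _ a Ha))). simpl. unfold nxt; simpl.
    destruct (constructive_indefinite_description _ _) as [c [H1 [H2 H3]]]; simpl.
    eapply H3; reflexivity.
Qed.

Lemma strict_inc {W} (lt : W -> W -> Prop) (Hw : is_omega1 W lt) (g : nat -> W) :
  (forall k, lt (g k) (g (S k))) -> forall i k, i < k -> lt (g i) (g k).
Proof.
  intros H i k Hik. induction Hik; auto.
  eapply (o1_trans _ _ Hw); eauto.
Qed.

Lemma ext_limit {W} (lt : W -> W -> Prop) (Hw : is_omega1 W lt) be R :
  (forall g, lt g be -> Good lt g R (R g)) -> is_limit lt be -> exists r, Good lt be R r.
Proof.
  intros IH Hl.
  destruct (cofinal lt Hw be Hl) as [g [Hgb [Hgs Hgc]]].
  pose proof (strict_inc lt Hw g Hgs) as Hinc.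
  assert (Hle : forall i k, i <= k -> g i = g k \/ lt (g i) (g k)).
  { intros i k H; destruct (Nat.eq_dec i k); [subst; auto|right; apply Hinc; lia]. }
  assert (Htr : forall a b c, lt a b -> lt b c -> lt a c) by exact (o1_trans _ _ Hw).
  assert (Hirr : forall a, ~ lt a a) by exact (o1_irrefl _ _ Hw).
  assert (Htot : forall a b, ~ lt a b -> b = a \/ lt b a).
  { intros a b H. destruct (o1_total _ _ Hw a b) as [H'|[H'|H']]; [contradiction|left; auto|right; auto]. }
  assert (Hm : forall k, exists m, forall n, m <= n -> forall l, NoDup l ->
    (forall x, In x l -> lt x (g k) /\ R (g k) x <= n) -> S k * length l <= n).
  { intros k. destruct (IH (g k) (Hgb k)) as [_ [_ [_ HS]]]. apply HS. }
  pose (mf := fun k => proj1_sig (constructive_indefinite_description _ (Hm k))).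
  assert (Hmf : forall k n, mf k <= n -> forall l, NoDup l ->
    (forall x, In x l -> lt x (g k) /\ R (g k) x <= n) -> S k * length l <= n).
  { intros k. unfold mf. destruct (constructive_indefinite_description _ _) as [m Hm']; exact Hm'. }
  clearbody mf. clear Hm.
  pose (N := fun j => Nat.max j (Nat.max (bnd (fun i => R (g j) (g i)) j) (mf j))).
  pose (M := fun k => bnd N (S k)).
  assert (HMmono : forall i k, i <= k -> M i <= M k).
  { intros; unfold M; apply bnd_mono; lia. }
  assert (HNM : forall k, N k <= M k) by (intros; unfold M; apply bnd_ge; lia).
  assert (HMk : forall k, k <= M k) by (intros k; specialize (HNM k); unfold N in HNM; lia).
  assert (HMR : forall i k, i < k -> R (g k) (g i) <= M k).
  { intros i k H; specialize (HNM k); unfold N in HNM.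
    pose proof (bnd_ge (fun i => R (g k) (g i)) i k H); simpl in *; lia. }
  assert (HMf : forall k, mf k <= M k) by (intros k; specialize (HNM k); unfold N in HNM; lia).
  clearbody M. clear N HNM.
  assert (Hb : forall a, exists k, lt a be -> lt a (g k) /\ forall i, i < k -> ~ lt a (g i)).
  { intros a. destruct (classic (lt a be)) as [Ha|Ha].
    - destruct (least_ex (fun k => lt a (g k)) (Hgc a Ha)) as [k Hk]. exists k; auto.
    - exists 0; tauto. }
  pose (blk := fun a => proj1_sig (constructive_indefinite_description _ (Hb a))).
  assert (Hblk : forall a, lt a be -> lt a (g (blk a)) /\ forall i, i < blk a -> ~ lt a (g i)).
  { intros a. unfold blk. destruct (constructive_indefinite_description _ _) as [k Hk]; exact Hk. }
  clearbody blk. clear Hb.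
  pose (T := fun a i => if excluded_middle_informative (lt (g i) a) then R a (g i) else 0).
  exists (fun a => Nat.max (M (blk a)) (Nat.max (R (g (blk a)) a) (bnd (T a) (blk a)))).
  assert (Hkl : forall a b, lt a b -> lt b be -> blk a <= blk b).
  { intros a b Hab Hb. destruct (Hblk b Hb) as [Hb1 _].
    destruct (Hblk a (Htr _ _ _ Hab Hb)) as [_ Ha2].
    destruct (Nat.le_gt_cases (blk a) (blk b)); auto.
    exfalso; apply (Ha2 (blk b) H). exact (Htr _ _ _ Hab Hb1). }
  assert (HT : forall b i, i < blk b -> lt (g i) b -> R b (g i) <= bnd (T b) (blk b)).
  { intros b i Hi Hgi. pose proof (bnd_ge (T b) i (blk b) Hi) as H.
    assert (E : T b i = R b (g i)) by (unfold T; destruct (excluded_middle_informative (lt (g i) b)); [reflexivity|contradiction]).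
    rewrite E in H; exact H. }
  split; [|split; [|split]].
  -
    intros a b Hab Hb. pose proof (Hkl a b Hab Hb) as Hk.
    assert (Ha : lt a be) by exact (Htr _ _ _ Hab Hb).
    destruct (Hblk a Ha) as [Ha1 Ha2]. destruct (Hblk b Hb) as [Hb1 Hb2].
    set (k := blk a) in *. set (l := blk b) in *.
    pose proof (HMmono k l Hk).
    assert (R (g k) a <= Nat.max (R b a) (Nat.max (M l) (Nat.max (R (g l) b) (bnd (T b) l)))).
    { destruct (Nat.eq_dec k l) as [E|E].
      - rewrite E in *. destruct (IH (g l) (Hgb l)) as [HA _].
        specialize (HA a b Hab Hb1). lia.
      - assert (Hkl' : k < l) by lia.
        destruct (Htot _ _ (Hb2 k Hkl')) as [E'|E'].
        + rewrite E'. lia.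
        + destruct (IH b Hb) as [_ [HB _]]. specialize (HB a (g k) Ha1 E').
          specialize (HT b k Hkl' E'). fold l in HT. lia. }
    assert (bnd (T a) k <= Nat.max (R b a) (Nat.max (M l) (Nat.max (R (g l) b) (bnd (T b) l)))).
    { apply bnd_le. intros i Hi. unfold T at 1.
      destruct (excluded_middle_informative _) as [Hgi|]; [|lia].
      destruct (IH b Hb) as [_ [HB _]]. specialize (HB (g i) a Hgi Hab).
      specialize (HT b i ltac:(lia) (Htr _ _ _ Hgi Hab)). fold l in HT. lia. }
    lia.
  -
    intros a b Hab Hb. pose proof (Hkl a b Hab Hb) as Hk.
    assert (Ha : lt a be) by exact (Htr _ _ _ Hab Hb).
    destruct (Hblk a Ha) as [Ha1 Ha2]. destruct (Hblk b Hb) as [Hb1 Hb2].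
    set (k := blk a) in *. set (l := blk b) in *.
    destruct (Nat.eq_dec k l) as [E|E].
    + rewrite E in *. destruct (IH (g l) (Hgb l)) as [_ [HB _]].
      specialize (HB a b Hab Hb1). lia.
    + assert (Hkl' : k < l) by lia.
      destruct (Htot _ _ (Hb2 k Hkl')) as [E'|E'].
      * rewrite <- E'. lia.
      * destruct (IH b Hb) as [HA _]. specialize (HA a (g k) Ha1 E').
        specialize (HT b k Hkl' E'). fold l in HT. lia.
  -
    intros n.
    assert (HL : forall K, exists L, forall k a, k <= K -> lt a (g k) -> R (g k) a <= n -> In a L).
    { induction K as [|K [L HL]].
      - destruct (IH (g 0) (Hgb 0)) as [_ [_ [HF _]]]. destruct (HF n) as [L HL].
        exists L. intros k a Hk; replace k with 0 by lia; auto.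
      - destruct (IH (g (S K)) (Hgb (S K))) as [_ [_ [HF _]]]. destruct (HF n) as [L' HL'].
        exists (L ++ L'). intros k a Hk H1 H2. apply in_or_app.
        destruct (Nat.eq_dec k (S K)); [subst; right; auto|left; apply (HL k); auto; lia]. }
    destruct (HL n) as [L HL']. exists L. intros a Ha Hr.
    destruct (Hblk a Ha) as [Ha1 _]. specialize (HMk (blk a)).
    apply (HL' (blk a)); auto; lia.
  -
    intros k0. exists (M k0). intros n Hn l Hnd Hl'.
    assert (HK : exists K, k0 <= K /\ M K <= n /\ forall x, In x l -> blk x <= K).
    { clear Hnd. induction l as [|x l IHl].
      - exists k0; split; auto; split; auto; intros x [].
      - destruct IHl as [K [H1 [H2 H3]]].
        + intros y Hy; apply Hl'; right; auto.
        + destruct (Hl' x (or_introl eq_refl)) as [_ Hx].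
          exists (Nat.max K (blk x)). split; [lia|split].
          * destruct (Nat.max_spec K (blk x)) as [[_ E]|[_ E]]; rewrite E; lia.
          * intros y [<-|Hy]; [lia|]. specialize (H3 y Hy); lia. }
    destruct HK as [K [HK1 [HK2 HK3]]].
    enough (S K * length l <= n) by nia.
    apply (Hmf K n); [specialize (HMf K); lia|exact Hnd|].
    intros x Hx. destruct (Hl' x Hx) as [Hxb Hxr].
    destruct (Hblk x Hxb) as [Hx1 _]. specialize (HK3 x Hx).
    destruct (Nat.eq_dec (blk x) K) as [E|E].
    + rewrite <- E. split; auto; lia.
    + assert (Hlt : blk x < K) by lia.
      split; [exact (Htr _ _ _ Hx1 (Hinc _ _ Hlt))|].
      destruct (IH (g K) (Hgb K)) as [HA _].
      specialize (HA x (g (blk x)) Hx1 (Hinc _ _ Hlt)).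
      specialize (HMR _ _ Hlt). lia.
Qed.

Lemma ext_succ {W} (lt : W -> W -> Prop) (Hw : is_omega1 W lt) be R g :
  (forall x, lt x be -> Good lt x R (R x)) -> lt g be ->
  (forall b, lt b be -> lt b g \/ b = g) -> exists r, Good lt be R r.
Proof.
  intros IH Hg Hmax. exists (R g).
  destruct (IH g Hg) as [HA [HB [HF HS]]].
  split; [|split; [|split]].
  - intros a b Hab Hb. destruct (Hmax b Hb) as [H|<-]; [apply HA; auto|lia].
  - intros a b Hab Hb. destruct (Hmax b Hb) as [H|<-]; [apply HB; auto|lia].
  - intros n. destruct (HF n) as [L HL]. exists (L ++ [g]). intros a Ha Hr.
    apply in_or_app. destruct (Hmax a Ha) as [H|<-]; [left; auto|right; left; auto].
  - intros k. destruct (HS (S (2 * k))) as [m Hm]. exists (Nat.max m (2 * S k)).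
    intros n Hn l Hnd Hl.
    destruct (classic (In g l)) as [Hin|Hin].
    + destruct (in_split _ _ Hin) as [l1 [l2 E]]. subst l.
      pose proof (NoDup_remove_1 _ _ _ Hnd) as Hnd'.
      pose proof (NoDup_remove_2 _ _ _ Hnd) as Hng.
      assert (S (S (2 * k)) * length (l1 ++ l2) <= n).
      { apply Hm; [lia|auto|]. intros x Hx.
        assert (Hx' : In x (l1 ++ g :: l2)).
        { apply in_app_or in Hx; apply in_or_app; destruct Hx; [left|right; right]; auto. }
        destruct (Hl x Hx') as [H1 H2]. split; auto.
        destruct (Hmax x H1) as [H|E]; auto. subst; contradiction. }
      rewrite length_app in *; simpl. nia.
    + assert (S (S (2 * k)) * length l <= n).
      { apply Hm; [lia|auto|]. intros x Hx. destruct (Hl x Hx) as [H1 H2]. split; auto.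
        destruct (Hmax x H1) as [H|E]; auto. subst; contradiction. }
      nia.
Qed.

Lemma ext_all {W} (lt : W -> W -> Prop) (Hw : is_omega1 W lt) be R :
  (forall x, lt x be -> Good lt x R (R x)) -> exists r, Good lt be R r.
Proof.
  intros IH.
  destruct (classic (exists b, lt b be)) as [Hex|Hno].
  - destruct (classic (exists g, lt g be /\ forall b, lt b be -> ~ lt g b)) as [[g [Hg Hgm]]|Hnm].
    + apply (ext_succ lt Hw be R g IH Hg). intros b Hb.
      destruct (o1_total _ _ Hw b g) as [H|[H|H]]; auto. exfalso; exact (Hgm b Hb H).
    + apply (ext_limit lt Hw be R IH). split; auto.
      intros b Hb. destruct (classic (exists c, lt b c /\ lt c be)) as [H|H]; auto.
      exfalso; apply Hnm. exists b; split; auto. intros c Hc Hbc; apply H; eauto.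
  - exists (fun _ => 0). repeat split.
    + intros a b _ Hb; exfalso; eauto.
    + intros a b _ Hb; exfalso; eauto.
    + intros n; exists []; intros a Ha; exfalso; eauto.
    + intros k; exists 0; intros n _ l _ Hl. destruct l as [|x l]; simpl; [lia|].
      exfalso; apply Hno; exists x; apply (Hl x); left; auto.
Qed.

Definition step {W} (lt : W -> W -> Prop) (be : W) (prev : forall y, lt y be -> W -> nat) : W -> nat :=
  let R := fun y => match excluded_middle_informative (lt y be) with
                    | left p => prev y p | right _ => fun _ => 0 end in
  match excluded_middle_informative (exists r, Good lt be R r) with
  | left H => proj1_sig (constructive_indefinite_description _ H)
  | right _ => fun _ => 0 end.

Theorem mainTheorem18 (W : Type) (lt : W -> W -> Prop) (Hw : is_omega1 W lt) :
  exists rho : W -> W -> nat, is_rho_function lt rho /\ smooth lt rho.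
Proof.
  pose (Rho := Fix (o1_wf _ _ Hw) (fun _ => W -> nat) (step lt)).
  assert (Heq : forall x, Rho x = step lt x (fun y _ => Rho y)).
  { intros x. unfold Rho. refine (Fix_eq _ _ _ _ x).
    intros x0 f h E. assert (f = h).
    { apply functional_extensionality_dep; intros y.
      apply functional_extensionality_dep; intros p. apply E. }
    subst; reflexivity. }
  clearbody Rho.
  assert (HG : forall be, Good lt be Rho (Rho be)).
  { intros be. induction be as [be IH] using (well_founded_ind (o1_wf _ _ Hw)).
    pose (R := fun y => match excluded_middle_informative (lt y be) with
                    | left p => Rho y | right _ => fun _ : W => 0 end).
    assert (ER : forall y, lt y be -> R y = Rho y).
    { intros y Hy. unfold R. destruct (excluded_middle_informative _); [reflexivity|contradiction]. }
    assert (Hex : exists r, Good lt be R r).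
    { apply (ext_all lt Hw be R). intros x Hx. rewrite (ER x Hx).
      apply (Good_congr lt x Rho R); [|apply IH; auto].
      intros b Hb. symmetry; apply ER. exact (o1_trans _ _ Hw _ _ _ Hb Hx). }
    rewrite Heq. unfold step. fold R.
    destruct (excluded_middle_informative _) as [H|H]; [|contradiction].
    destruct (constructive_indefinite_description _ H) as [r Hr]; simpl.
    apply (Good_congr lt be R Rho); auto. }
  exists (fun a b => Rho b a). split.
  - split; [|split].
    + intros a b c Hab Hbc. destruct (HG c) as [HA _]. apply HA; auto.
    + intros a b c Hab Hbc. destruct (HG c) as [_ [HB _]]. apply HB; auto.
    + intros b n. destruct (HG b) as [_ [_ [HF _]]]. apply HF.
  - intros lam _. destruct (HG lam) as [_ [_ [HF HS]]].
    destruct (HS 0) as [m Hm]. destruct (HF m) as [L HL].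
    exists (S (length L)). intros n Hn l Hnd Hl.
    destruct (Nat.le_gt_cases m n) as [Hmn|Hmn].
    + specialize (Hm n Hmn l Hnd Hl). nia.
    + assert (length l <= length L).
      { apply NoDup_incl_length; auto. intros x Hx. destruct (Hl x Hx) as [H1 H2].
        apply HL; auto; lia. }
      nia.
Qed.
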